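(* Let $$A=\bigoplus_{i\in I}B(H_{\mathrm{in},i}),\quad B=\bigoplus_{j\in J}B(H_{\mathrm{out},j}),\quad C=\bigoplus_{k\in K}B(K_{\mathrm{in},k}),\quad D=\bigoplus_{l\in L}B(K_{\mathrm{out},l}),$$ and let $\mathcal S:\underline{\mathrm{Hom}}(A,B)\to\underline{\mathrm{Hom}}(C,D)$ be a deterministic supermap. Then there exists a unital completely positive map $\mathcal N:A\to C$ such that, for every positive $\rho\in C$ with $\mathrm{Tr}(\rho)=1$, $$\mathcal S_*(1_D\boxtimes\rho)=1_B\boxtimes\mathcal N_*(\rho).$$ Here $\mathcal S_*$ and $\mathcal N_*$ are the duals of $\mathcal S$ and $\mathcal N$.
   Context: Throughout, all Hilbert spaces are finite-dimensional and nonzero, and all index sets are finite and nonempty. **Multimatrix algebras.** A finite-dimensional $C^*$-algebra is written as $A=\bigoplus_{i\in I}B(H_i)$, with elements $X=(X_i)_{i\in I}$. Its trace is $\mathrm{Tr}(X)=\sum_i\mathrm{Tr}(X_i)$, and $X\ge 0$ means every block is positive semidefinite. **The algebra $\underline{\mathrm{Hom}}$ and (TP).** For $A=\bigoplus_{i\in I}B(H_i)$ and $B=\bigoplus_{j\in J}B(K_j)$, set $$\underline{\mathrm{Hom}}(A,B):=\bigoplus_{(j,i)\in J\times I}B(K_j\otimes H_i).$$ An element $X\in\underline{\mathrm{Hom}}(A,B)$ satisfies **(TP)** if $\sum_{j\in J}\mathrm{Tr}_{K_j}(X_{ji})=1_{H_i}$ for every $i\in I$. These positive (TP) elements are exactly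 the Choi operators of the channels (CPTP maps) $A\to B$. **Notation.** For $\rho=(\rho_i)_i\in A$, write $1_B\boxtimes\rho:=(1_{K_j}\otimes\rho_i)_{(j,i)}\in\underline{\mathrm{Hom}}(A,B)$. **Deterministic supermaps.** A deterministic supermap is a completely positive linear map $\mathcal S:\underline{\mathrm{Hom}}(A,B)\to\underline{\mathrm{Hom}}(C,D)$ sending every positive element satisfying (TP) to an element satisfying (TP). **Duals.** For a linear map $\Phi:\mathcal A\to\mathcal B$ between such algebras, the dual $\Phi_*:\mathcal B\to\mathcal A$ is the unique linear map with $$\mathrm{Tr}(\Phi_*(y)\,x)=\mathrm{Tr}(y\,\Phi(x))\quad\text{for all } x\in\mathcal A,\ y\in\mathcal B.$$ If $\Phi$ is CP then $\Phi_*$ is CP. A CP map $\Phi$ is unital iff $\Phi_*$ is trace-preserving. *)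

(* Defs.v *)
From HB Require Import structures.
From mathcomp Require Import all_boot all_order all_algebra.
From mathcomp Require Import algC.
From mathcomp Require Import mxtens.
Set Implicit Arguments. Unset Strict Implicit. Unset Printing Implicit Defensive.
Import Order.TTheory GRing.Theory Num.Theory.
Local Open Scope ring_scope.

(* Scalars: algC (algebraic complex numbers), a numClosedFieldType; its
   order  0 <= z  means "z is real and nonnegative".                        *)

(* Multimatrix algebra  A = (+)_{i in I} B(C^{d i}) : elements X = (X_i)_i *)
Definition alg (I : finType) (d : I -> nat) := forall i : I, 'M[algC]_(d i).

Section Ops.
Variables (I : finType) (d : I -> nat).
Definition addA (x y : alg d) : alg d := fun i => x i + y i.
Definition scaleA (a : algC) (x : alg d) : alg d := fun i => a *: x i.
Definition mulA (x y : alg d) : alg d := fun i => x i *m y i.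
Definition oneA : alg d := fun i => 1%:M.
Definition trA (x : alg d) : algC := \sum_i \tr (x i).
End Ops.

Definition psd n (M : 'M[algC]_n) : Prop :=
  forall v : 'cV[algC]_n, 0 <= ((map_mx Num.conj v)^T *m M *m v) 0 0.

Definition posA (I : finType) (d : I -> nat) (x : alg d) : Prop :=
  forall i, psd (x i).

(* Hilbert space tensor product K (x) H of dims m, n is C^(m*n) with the
   basis ordering mxtens_index (k, h); HomA(A,B)_(j,i) = B(K_j (x) H_i). *)
Definition homd (J I : finType) (dB : J -> nat) (dA : I -> nat) (p : J * I) : nat :=
  dB p.1 * dA p.2.

Definition HomA (I J : finType) (dA : I -> nat) (dB : J -> nat) :=
  alg (homd dB dA).

Definition ptrace1 m n (X : 'M[algC]_(m * n)) : 'M[algC]_n :=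
  \matrix_(a, b) \sum_(k < m) X (mxtens_index (k, a)) (mxtens_index (k, b)).

Definition TP (I J : finType) (dA : I -> nat) (dB : J -> nat)
  (X : HomA dA dB) : Prop :=
  forall i : I, \sum_(j : J) (ptrace1 (X (j, i) : 'M_(dB j * dA i)) : 'M_(dA i)) = 1%:M.

Definition boxt (I J : finType) (dA : I -> nat) (dB : J -> nat)
  (rho : alg dA) : HomA dA dB :=
  fun p => tensmx (1%:M : 'M[algC]_(dB p.1)) (rho p.2).

Definition linA (I J : finType) (dA : I -> nat) (dB : J -> nat)
  (f : alg dA -> alg dB) : Prop :=
  forall (a : algC) (x y : alg dA), f (addA (scaleA a x) y) = addA (scaleA a (f x)) (f y).

(* M_n(A) = (+)_i B(C^n (x) C^{d i}); block (a,b) of X in M_n(A) *)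
Definition blk (I : finType) (d : I -> nat) (n : nat)
  (X : alg (fun i => n * d i)) (a b : 'I_n) : alg d :=
  fun i => \matrix_(r, s) X i (mxtens_index (a, r)) (mxtens_index (b, s)).

(* amplification  id_{M_n} (x) f *)
Definition ampl (I J : finType) (dA : I -> nat) (dB : J -> nat)
  (f : alg dA -> alg dB) (n : nat) (X : alg (fun i => n * dA i)) :
  alg (fun j => n * dB j) :=
  fun j => \matrix_(u, v)
    f (blk X (mxtens_unindex u).1 (mxtens_unindex v).1) j
      (mxtens_unindex u).2 (mxtens_unindex v).2.

Definition CP (I J : finType) (dA : I -> nat) (dB : J -> nat)
  (f : alg dA -> alg dB) : Prop :=
  linA f /\ forall (n : nat) (X : alg (fun i => n * dA i)),
    posA X -> posA (ampl f X).

Definition unital (I J : finType) (dA : I -> nat) (dB : J -> nat)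
  (f : alg dA -> alg dB) : Prop := f (oneA dA) = oneA dB.

Definition det_supermap (I J K L : finType) (dA : I -> nat) (dB : J -> nat)
  (dC : K -> nat) (dD : L -> nat) (S : HomA dA dB -> HomA dC dD) : Prop :=
  CP S /\ forall X : HomA dA dB, posA X -> TP X -> TP (S X).

Definition is_dual (I J : finType) (dA : I -> nat) (dB : J -> nat)
  (f : alg dA -> alg dB) (g : alg dB -> alg dA) : Prop :=
  forall (x : alg dA) (y : alg dB), trA (mulA (g y) x) = trA (mulA y (f x)).

(* Main.v *)
Require Import Defs.
Set Implicit Arguments. Unset Strict Implicit. Unset Printing Implicit Defensive.
From HB Require Import structures.
From mathcomp Require Import all_boot all_order all_algebra.
From mathcomp Require Import algC.
From mathcomp Require Import mxtens.
From mathcomp Require Import ring.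
From Stdlib Require Import FunctionalExtensionality.
Require Import Defs.
Set Implicit Arguments. Unset Strict Implicit. Unset Printing Implicit Defensive.
Import Order.TTheory GRing.Theory Num.Theory.
Local Open Scope ring_scope.

Lemma sum_tens m n (F : 'I_(m * n) -> algC) :
  \sum_u F u = \sum_(a < m) \sum_(b < n) F (mxtens_index (a, b)).
Proof.
rewrite pair_bigA /=.
rewrite (reindex (@mxtens_index m n)) /=; last first.
  by exists (@mxtens_unindex m n) => x _; rewrite (mxtens_indexK, mxtens_unindexK).
by apply: eq_bigr => -[a b].
Qed.

Lemma mxtens_index_inj m n : injective (@mxtens_index m n).
Proof. exact: can_inj (@mxtens_indexK m n). Qed.

Lemma tens11 m n : tensmx (1%:M : 'M[algC]_m) (1%:M : 'M[algC]_n) = 1%:M.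
Proof.
apply/matrixP => u v.
case: (mxtens_indexP u) => a b; case: (mxtens_indexP v) => c d.
rewrite tensmxE !mxE (inj_eq (@mxtens_index_inj m n)) xpair_eqE.
by case: (a == c); case: (b == d); rewrite ?mulr1 ?mulr0.
Qed.

Lemma ptrace1E m n (X : 'M[algC]_(m * n)) a b :
  ptrace1 X a b = \sum_(k < m) X (mxtens_index (k, a)) (mxtens_index (k, b)).
Proof. by rewrite mxE. Qed.

Lemma ptrace1_tens m n (A : 'M[algC]_m) (B : 'M[algC]_n) :
  ptrace1 (tensmx A B) = \tr A *: B.
Proof.
apply/matrixP => a b; rewrite ptrace1E !mxE mulr_suml.
by apply: eq_bigr => k _; rewrite tensmxE.
Qed.

Lemma ptrace1_lin m n (c : algC) (X Y : 'M[algC]_(m * n)) :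
  ptrace1 (c *: X + Y) = c *: ptrace1 X + ptrace1 Y.
Proof.
apply/matrixP => a b; rewrite !mxE mulr_sumr -big_split /=.
by apply: eq_bigr => k _; rewrite !mxE.
Qed.

Lemma ptrace1_adj m n (X : 'M[algC]_(m * n)) :
  ptrace1 (map_mx Num.conj X)^T = (map_mx Num.conj (ptrace1 X))^T.
Proof.
apply/matrixP => a b; rewrite !mxE rmorph_sum.
by apply: eq_bigr => k _; rewrite !mxE.
Qed.

Lemma tr_tens_ptrace m n (r : 'M[algC]_n) (Y : 'M[algC]_(m * n)) :
  \tr (tensmx 1%:M r *m Y) = \tr (r *m ptrace1 Y).
Proof.
rewrite /mxtrace sum_tens.
under eq_bigr => k _ do under eq_bigr => a _ do rewrite mxE sum_tens.
rewrite exchange_big /=; apply: eq_bigr => a _.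
rewrite mxE.
transitivity (\sum_(k < m) \sum_(b < n) r a b * Y (mxtens_index (k, b)) (mxtens_index (k, a))).
  apply: eq_bigr => k _; rewrite (bigD1 k) //= [X in _ + X]big1 ?addr0.
    by apply: eq_bigr => b _; rewrite tensmxE !mxE eqxx mul1r.
  move=> k' nk; apply: big1 => b _; rewrite tensmxE !mxE eq_sym (negbTE nk).
  by rewrite mul0r mul0r.
rewrite exchange_big /=; apply: eq_bigr => b _.
by rewrite ptrace1E mulr_sumr.
Qed.

Lemma qformE n (M : 'M[algC]_n) (v : 'cV[algC]_n) :
  ((map_mx Num.conj v)^T *m M *m v) 0 0 =
  \sum_a \sum_b (v a 0)^* * M a b * v b 0.
Proof.
rewrite mxE exchange_big /=; apply: eq_bigr => a _.
rewrite mxE mulr_suml; apply: eq_bigr => b _; rewrite !mxE.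
by [].
Qed.
Lemma sum_delta (T : finType) (k : T) (G : T -> algC) :
  \sum_k' ((k == k')%:R * G k') = G k.
Proof.
rewrite (bigD1 k) //= eqxx mul1r big1 ?addr0 // => k' nk.
by rewrite eq_sym (negbTE nk) mul0r.
Qed.

Lemma ptrace1Z m n (c : algC) (X : 'M[algC]_(m * n)) :
  ptrace1 (c *: X) = c *: ptrace1 X.
Proof.
apply/matrixP => a b; rewrite !mxE mulr_sumr.
by apply: eq_bigr => k _; rewrite !mxE.
Qed.

Lemma tensmx_linr m n (c : algC) (x y : 'M[algC]_n) :
  tensmx (1%:M : 'M[algC]_m) (c *: x + y) = c *: tensmx 1%:M x + tensmx 1%:M y.
Proof.
apply/matrixP => u v.
case: (mxtens_indexP u) => a b; case: (mxtens_indexP v) => a' b'.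
by rewrite !mxE !mxtens_indexK /= mulrDr mulrCA.
Qed.

Section Maps.
Variables (I J : finType) (dA : I -> nat) (dB : J -> nat).

Definition PTr (X : HomA dA dB) : alg dA :=
  fun i => \sum_j (ptrace1 (X (j, i) : 'M_(dB j * dA i)) : 'M_(dA i)).

Definition cB : algC := (\sum_j (dB j)%:R)^-1.

Definition Emb (x : alg dA) : HomA dA dB := scaleA cB (boxt dB x).

Lemma TP_PTr (X : HomA dA dB) : TP X <-> forall i, PTr X i = 1%:M.
Proof. by []. Qed.

Lemma PTr_lin (a : algC) (X Y : HomA dA dB) :
  PTr (addA (scaleA a X) Y) = addA (scaleA a (PTr X)) (PTr Y).
Proof.
apply: functional_extensionality_dep => i.
rewrite /PTr /addA /scaleA scaler_sumr -big_split /=.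
by apply: eq_bigr => j _; rewrite ptrace1_lin.
Qed.

Lemma trA_lin (y : alg dA) (a : algC) (x z : alg dA) :
  trA (mulA y (addA (scaleA a x) z)) = a * trA (mulA y x) + trA (mulA y z).
Proof.
rewrite /trA /mulA /addA /scaleA mulr_sumr -big_split /=.
by apply: eq_bigr => i _; rewrite mulmxDr -scalemxAr mxtraceD mxtraceZ.
Qed.

Lemma trA_boxt (s : alg dA) (X : HomA dA dB) :
  trA (mulA (boxt dB s) X) = trA (mulA s (PTr X)).
Proof.
rewrite /trA /mulA.
transitivity (\sum_(p : J * I) \tr (boxt dB s (p.1, p.2) *m X (p.1, p.2))).
  by apply: eq_bigr => -[].
rewrite -(pair_bigA _ (fun (j : J) (i : I) =>
   \tr (boxt dB s (j, i) *m X (j, i)))) /= exchange_big /=.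
apply: eq_bigr => i _.
rewrite /PTr mulmx_sumr raddf_sum; apply: eq_bigr => j _.
exact: tr_tens_ptrace.
Qed.

Lemma trA_one (y : alg dA) : trA (mulA y (oneA dA)) = trA y.
Proof. by rewrite /trA /mulA /oneA; apply: eq_bigr => i _; rewrite mulmx1. Qed.

Lemma sumdB_gt0 : (0 < #|J|)%N -> (forall j, 0 < dB j)%N ->
  0 < \sum_j ((dB j)%:R : algC).
Proof.
move=> /card_gt0P [j0 _] hd.
rewrite (bigD1 j0) //= ltr_wpDr ?sumr_ge0 // ?ltr0n //.
Qed.

Lemma cB_gt0 : (0 < #|J|)%N -> (forall j, 0 < dB j)%N -> 0 < cB.
Proof. by move=> h1 h2; rewrite invr_gt0 sumdB_gt0. Qed.

Lemma PTr_Emb : (0 < #|J|)%N -> (forall j, 0 < dB j)%N ->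
  forall x, PTr (Emb x) = x.
Proof.
move=> h1 h2 x; apply: functional_extensionality_dep => i.
rewrite /PTr /Emb /scaleA /boxt /=.
under eq_bigr => j _ do rewrite ptrace1Z ptrace1_tens mxtrace1 scalerA.
rewrite -scaler_suml -mulr_sumr mulVf ?scale1r //.
by rewrite gt_eqF // sumdB_gt0.
Qed.

Lemma Emb_lin (a : algC) (x y : alg dA) :
  Emb (addA (scaleA a x) y) = addA (scaleA a (Emb x)) (Emb y).
Proof.
apply: functional_extensionality_dep => p.
rewrite /Emb /scaleA /addA /boxt tensmx_linr scalerDr !scalerA mulrC.
by [].
Qed.

End Maps.

Lemma psd_pert n (c s M : algC) (H : 'M[algC]_n) :
  0 < c -> 0 <= s -> s * M <= c ->
  (forall a b, (H b a)^* = H a b) ->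
  \sum_a \sum_b `|H a b| <= M ->
  psd (s *: H + c *: 1%:M).
Proof.
move=> hc hs hsM hH hM v; rewrite qformE.
set q := \sum_a `|v a 0| ^+ 2.
set z := \sum_a \sum_b (v a 0)^* * H a b * v b 0.
have -> : \sum_a \sum_b (v a 0)^* * (s *: H + c *: 1%:M) a b * v b 0
    = s * z + c * q.
  rewrite /z /q mulr_sumr mulr_sumr -big_split; apply: eq_bigr => a _ /=.
  under eq_bigr => b _ do rewrite !mxE mulrDr mulrDl.
  rewrite big_split /= mulr_sumr; congr (_ + _).
    by apply: eq_bigr => b _; ring.
  rewrite (bigD1 a) //= [X in _ + X]big1 ?addr0.
    by rewrite eqxx /= mulr1n normCK; ring.
  by move=> b nb; rewrite eq_sym (negbTE nb) mulr0 mulr0 mul0r.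
have hzr : z \is Num.real.
  apply/CrealP; rewrite /z rmorph_sum exchange_big /=.
  apply: eq_bigr => a _; rewrite rmorph_sum; apply: eq_bigr => b _.
  rewrite !rmorphM /= conjCK. by rewrite hH; ring.
have hq : 0 <= q by rewrite sumr_ge0 // => a _; rewrite exprn_ge0.
have hsq : forall a, `|v a 0| ^+ 2 <= q.
  move=> a; rewrite /q (bigD1 a) //= lerDl sumr_ge0 // => b _.
  by rewrite exprn_ge0.
have hvv : forall a b, `|v a 0| * `|v b 0| <= q.
  move=> a b.
  case/orP: (ger_leVge (normr_ge0 (v a 0)) (normr_ge0 (v b 0))) => h.
  - by apply: le_trans (hsq b); rewrite expr2 ler_wpM2r.
  - by apply: le_trans (hsq a); rewrite expr2 ler_wpM2l.
have hz : `|z| <= M * q.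
  apply: le_trans (ler_norm_sum _ _ _) _.
  apply: (@le_trans _ _ (\sum_a \sum_b `|H a b| * q)).
    apply: ler_sum => a _; apply: le_trans (ler_norm_sum _ _ _) _.
    apply: ler_sum => b _.
    by rewrite !normrM norm_conjC mulrAC mulrC ler_wpM2l.
  under [X in X <= _]eq_bigr => a _ do rewrite -mulr_suml.
  by rewrite -mulr_suml ler_wpM2r.
have h1 : - (s * z) <= c * q.
  apply: (@le_trans _ _ (s * (M * q))).
    rewrite -mulrN ler_wpM2l //; apply: le_trans hz.
    by rewrite -normrN real_ler_norm // rpredN.
  by rewrite mulrA ler_wpM2r.
by rewrite addrC -(opprK (s * z)) subr_ge0.
Qed.

Definition adjA (I : finType) (d : I -> nat) (X : alg d) : alg d :=
  fun p => (map_mx Num.conj (X p))^T.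
Definition zeroA (I : finType) (d : I -> nat) : alg d := fun p => 0.

Section Main.
Variables (I J K L : finType) (dA : I -> nat) (dB : J -> nat)
  (dC : K -> nat) (dD : L -> nat).
Variable S : HomA dA dB -> HomA dC dD.
Hypothesis hS : det_supermap S.
Hypothesis hJ : (0 < #|J|)%N.
Hypothesis hdB : forall j, (0 < dB j)%N.

Definition g (rho : alg dC) (X : HomA dA dB) := trA (mulA rho (PTr (S X))).

Lemma g_lin rho a X Y : g rho (addA (scaleA a X) Y) = a * g rho X + g rho Y.
Proof. by rewrite /g hS.1.1 PTr_lin trA_lin. Qed.

Lemma g_TP rho X : trA rho = 1 -> posA X -> TP X -> g rho X = 1.
Proof.
move=> hr hp ht; have := hS.2 _ hp ht => /TP_PTr hT.
rewrite /g; have -> : PTr (S X) = oneA dC by apply: functional_extensionality_dep.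
by rewrite trA_one.
Qed.

Lemma g_zero rho : g rho (zeroA _) = 0.
Proof.
have h : zeroA (homd dB dA) = addA (scaleA 1 (zeroA _)) (zeroA _).
  apply: functional_extensionality_dep => p.
  by rewrite /addA /scaleA /zeroA scaler0 addr0.
have := g_lin rho 1 (zeroA _) (zeroA _); rewrite -h mul1r.
by move/(congr1 (fun t => t - g rho (zeroA (homd dB dA)))); rewrite subrr addrK.
Qed.

Lemma kill_herm rho (H : HomA dA dB) : trA rho = 1 ->
  (forall p a b, (H p b a)^* = H p a b) -> (forall i, PTr H i = 0) ->
  g rho H = 0.
Proof.
move=> hr hH hP.
set c := cB dB.
have hc : 0 < c by apply: cB_gt0.
set X0 := Emb dB (oneA dA).
set M := \sum_p \sum_a \sum_b `|H p a b|.
have hM0 : 0 <= M by rewrite sumr_ge0 // => p _; rewrite sumr_ge0 // => a _;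
  rewrite sumr_ge0.
have hM1 : M + 1 != 0 by rewrite gt_eqF // ltr_wpDl.
set s := c / (M + 1).
have hs0 : 0 < s by rewrite divr_gt0 // ltr_wpDl.
have hsM : s * M <= c.
  apply: (@le_trans _ _ (s * (M + 1))); first by apply: ler_wpM2l; rewrite ?(ltW hs0) ?lerDl.
  by rewrite /s divfK.
have hpos : forall t, 0 <= t -> t <= s -> posA (addA (scaleA t H) X0).
  move=> t ht0 hts p; rewrite /addA /scaleA /X0 /Emb /scaleA /boxt /oneA tens11.
  apply: (psd_pert (M := M)) => //.
    by apply: le_trans hsM; apply: ler_wpM2r.
  by rewrite /M (bigD1 p) //= lerDl sumr_ge0 // => q _; rewrite sumr_ge0 // => a _;
    rewrite sumr_ge0.
have hTP : forall t, TP (addA (scaleA t H) X0).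
  move=> t; apply/TP_PTr => i; rewrite PTr_lin /X0 PTr_Emb //.
  by rewrite /addA /scaleA hP scaler0 add0r.
have e1 := g_TP hr (hpos s (ltW hs0) (lexx _)) (hTP s).
have e0 := g_TP hr (hpos 0 (lexx _) (ltW hs0)) (hTP 0).
move: e1; rewrite g_lin; move: e0; rewrite g_lin mul0r add0r => ->.
move/(congr1 (fun t => t - 1)); rewrite addrK subrr => /eqP.
by rewrite mulf_eq0 (gt_eqF hs0) /= => /eqP.
Qed.

Lemma kill rho (Z : HomA dA dB) : trA rho = 1 -> (forall i, PTr Z i = 0) ->
  g rho Z = 0.
Proof.
move=> hr hZ.
set Zs := adjA Z.
have hZs : forall i, PTr Zs i = 0.
  move=> i; apply/matrixP => a b; rewrite /PTr /Zs /adjA summxE.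
  under eq_bigr => j _ do rewrite ptrace1_adj !mxE.
  rewrite -rmorph_sum.
  move: (congr1 (fun M : 'M_(dA i) => M b a) (hZ i)); rewrite /PTr summxE mxE.
  under eq_bigr => j _ do rewrite mxE.
  by move=> ->; rewrite mxE rmorph0.
have h1 := kill_herm (H := addA (scaleA 1 Z) Zs) hr.
have h2 := kill_herm (H := addA (scaleA 'i Z) (scaleA (- 'i) Zs)) hr.
rewrite g_lin in h1.
rewrite g_lin in h2.
have hs : g rho (scaleA (- 'i) Zs) = - 'i * g rho Zs.
  have -> : scaleA (- 'i) Zs = addA (scaleA (- 'i) Zs) (zeroA _).
    apply: functional_extensionality_dep => p.
    by rewrite /addA /zeroA addr0.
  by rewrite g_lin g_zero addr0.
rewrite hs in h2.
have e1 : 1 * g rho Z + g rho Zs = 0.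
  apply: h1.
    move=> p a b; rewrite /addA /scaleA /Zs /adjA !mxE rmorphD /= conjCK.
    by rewrite !rmorphM /= conjC1 !mul1r addrC.
  by move=> i; rewrite PTr_lin /addA /scaleA hZ hZs scaler0 addr0.
have e2 : 'i * g rho Z + - 'i * g rho Zs = 0.
  apply: h2.
    move=> p a b; rewrite /addA /scaleA /Zs /adjA !mxE rmorphD /=.
    by rewrite !rmorphM /= conjCK raddfN /= conjCi opprK; ring.
  move=> i; rewrite PTr_lin /addA /scaleA hZ.
  have -> : PTr (scaleA (- 'i) Zs) i = - 'i *: PTr Zs i.
    by rewrite /PTr /scaleA scaler_sumr; apply: eq_bigr => j _; rewrite ptrace1Z.
  by rewrite hZs !scaler0 addr0.
move: e1; rewrite mul1r addrC => /eqP; rewrite addr_eq0 => /eqP e1.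
move: e2; rewrite e1 mulrN mulNr opprK -mulr2n -mulrnAl => /eqP.
rewrite mulf_eq0 mulrn_eq0 (negbTE (neq0Ci _)) /=.
by move/eqP.
Qed.

End Main.

Lemma sum_only (T : finType) (k : T) (F : T -> algC) :
  (forall k', k' != k -> F k' = 0) -> \sum_k' F k' = F k.
Proof. by move=> h; rewrite (bigD1 k) //= big1 ?addr0. Qed.

Lemma sum_tens_2 m p (G : 'I_(m * p) -> 'I_(m * p) -> algC) :
  \sum_u \sum_v G u v =
  \sum_a \sum_r \sum_b \sum_s G (mxtens_index (a, r)) (mxtens_index (b, s)).
Proof.
rewrite sum_tens; apply: eq_bigr => a _; apply: eq_bigr => r _.
by rewrite sum_tens.
Qed.

Lemma sum_tens3 n m p (F : 'I_(n * (m * p)) -> algC) :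
  \sum_u F u = \sum_a \sum_k \sum_r F (mxtens_index (a, mxtens_index (k, r))).
Proof. by rewrite sum_tens; apply: eq_bigr => a _; rewrite sum_tens. Qed.

Lemma sum_tens3_2 n m p (G : 'I_(n * (m * p)) -> 'I_(n * (m * p)) -> algC) :
  \sum_u \sum_v G u v =
  \sum_a \sum_k \sum_r \sum_b \sum_k' \sum_s
    G (mxtens_index (a, mxtens_index (k, r)))
      (mxtens_index (b, mxtens_index (k', s))).
Proof.
rewrite sum_tens3; apply: eq_bigr => a _; apply: eq_bigr => k _.
by apply: eq_bigr => r _; rewrite sum_tens3.
Qed.

Section Ampl.
Variables (I J : finType) (dA : I -> nat) (dB : J -> nat).

Lemma blk_ampl (f : alg dA -> alg dB) n (X : alg (fun i => n * dA i)) a b :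
  blk (ampl f X) a b = f (blk X a b).
Proof.
apply: functional_extensionality_dep => j; apply/matrixP => r s.
by rewrite !mxE !mxtens_indexK.
Qed.

End Ampl.

Lemma ampl_comp (I J K : finType) (dA : I -> nat) (dB : J -> nat) (dC : K -> nat)
  (f : alg dA -> alg dB) (h : alg dB -> alg dC) n (X : alg (fun i => n * dA i)) :
  ampl h (ampl f X) = ampl (fun x => h (f x)) X.
Proof.
apply: functional_extensionality_dep => k; apply/matrixP => u v.
by rewrite !mxE blk_ampl.
Qed.

Lemma CP_comp (I J K : finType) (dA : I -> nat) (dB : J -> nat) (dC : K -> nat)
  (f : alg dA -> alg dB) (h : alg dB -> alg dC) :
  CP f -> CP h -> CP (fun x => h (f x)).
Proof.
move=> [lf pf] [lh ph]; split.
  by move=> a x y; rewrite lf lh.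
by move=> n X hX; rewrite -ampl_comp; apply: ph; apply: pf.
Qed.

Lemma cB_ge0 (J : finType) (dB : J -> nat) : 0 <= cB dB.
Proof. by rewrite invr_ge0 sumr_ge0 // => j _; rewrite ler0n. Qed.

Lemma ampl_Emb_pos (I J : finType) (dA : I -> nat) (dB : J -> nat) n
  (X : alg (fun i => n * dA i)) : posA X -> posA (ampl (Emb (dA := dA) dB) X).
Proof.
move=> hX [j i] w; rewrite qformE (@sum_tens3_2 n (dB j) (dA i)).
set y := fun k : 'I_(dB j) => \col_(t < n * dA i)
  w (mxtens_index ((mxtens_unindex t).1,
       mxtens_index (k, (mxtens_unindex t).2))) 0.
have E : forall a k r b k' s,
  ampl (Emb (dA := dA) dB) X (j, i) (mxtens_index (a, mxtens_index (k, r)))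
    (mxtens_index (b, mxtens_index (k', s))) =
  cB dB * ((k == k')%:R * X i (mxtens_index (a, r)) (mxtens_index (b, s))).
  move=> a k r b k' s.
  rewrite /ampl mxE !mxtens_indexK /= /Emb /scaleA mxE /boxt /= tensmxE.
  by rewrite /blk !mxE.
match goal with |- is_true (0 <= ?LL) => have -> : LL = cB dB * \sum_k
   ((map_mx Num.conj (y k))^T *m X i *m y k) 0 0 end.
  rewrite exchange_big mulr_sumr; apply: eq_bigr => k _.
  rewrite qformE sum_tens_2 mulr_sumr; apply: eq_bigr => a _.
  rewrite mulr_sumr; apply: eq_bigr => r _.
  rewrite mulr_sumr; apply: eq_bigr => b _.
  rewrite (@sum_only _ k); last first.
    move=> k' nk; apply: big1 => s _; rewrite E eq_sym (negbTE nk).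
    by rewrite mul0r mulr0 mulr0 mul0r.
  rewrite mulr_sumr; apply: eq_bigr => s _.
  rewrite E eqxx /y !mxE !mxtens_indexK /= mul1r.
  ring.
by rewrite mulr_ge0 ?cB_ge0 // sumr_ge0 // => k _; apply: hX.
Qed.

Lemma qform_sum (T : finType) k (M : T -> 'M[algC]_k) (w : 'cV[algC]_k) :
  ((map_mx Num.conj w)^T *m (\sum_t M t) *m w) 0 0 =
  \sum_t ((map_mx Num.conj w)^T *m M t *m w) 0 0.
Proof. by rewrite mulmx_sumr mulmx_suml summxE. Qed.

Lemma ampl_PTr_pos (I J : finType) (dA : I -> nat) (dB : J -> nat) n
  (Y : alg (fun p => n * homd dB dA p)) :
  posA Y -> posA (ampl (PTr (dA := dA) (dB := dB)) Y).
Proof.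
move=> hY i w.
set N := fun (j : J) (m : 'I_(dB j)) => \matrix_(u, v)
  Y (j, i) (mxtens_index ((mxtens_unindex u).1, mxtens_index (m, (mxtens_unindex u).2)))
           (mxtens_index ((mxtens_unindex v).1, mxtens_index (m, (mxtens_unindex v).2)))
  : 'M[algC]_(n * dA i).
have EM : ampl (PTr (dA := dA) (dB := dB)) Y i = \sum_j \sum_m N j m.
  apply/matrixP => u v; rewrite /ampl mxE /PTr !summxE; apply: eq_bigr => j _.
  rewrite summxE mxE; apply: eq_bigr => m _.
  by rewrite /blk !mxE.
rewrite EM qform_sum sumr_ge0 // => j _; rewrite qform_sum sumr_ge0 // => m _.
set y := \col_(t < n * (dB j * dA i))
  ((((mxtens_unindex (mxtens_unindex t).2).1 == m)%:R) *
   w (mxtens_index ((mxtens_unindex t).1, (mxtens_unindex (mxtens_unindex t).2).2)) 0).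
match goal with |- is_true (0 <= ?LL) => have -> : LL =
   ((map_mx Num.conj y)^T *m Y (j, i) *m y) 0 0 end; last exact: hY.
rewrite !qformE sum_tens_2 (@sum_tens3_2 n (dB j) (dA i)).
apply: eq_bigr => a _.
rewrite (@sum_only _ m); last first.
  move=> m' nm; apply: big1 => r _; apply: big1 => b _; apply: big1 => m'' _.
  apply: big1 => s _.
  by rewrite /y !mxE !mxtens_indexK /= (negbTE nm) mul0r rmorph0 !mul0r.
apply: eq_bigr => r _; apply: eq_bigr => b _.
rewrite (@sum_only _ m); last first.
  move=> m' nm; apply: big1 => s _.
  by rewrite /y !mxE !mxtens_indexK /= (negbTE nm) mul0r mulr0.
apply: eq_bigr => s _.
by rewrite /y /N !mxE !mxtens_indexK /= eqxx !mul1r.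
Qed.

Lemma trA_unit (I : finType) (d : I -> nat) (W : alg d) p (a b : 'I_(d p)) :
  trA (mulA W (fun q => \matrix_(r, s)
     (((q == p) && (val s == val a) && (val r == val b))%:R : algC))) = W p a b.
Proof.
rewrite /trA /mulA (bigD1 p) //= [X in _ + X]big1 ?addr0; last first.
  move=> q nq; rewrite /mxtrace big1 // => r _; rewrite mxE big1 // => s _.
  by rewrite mxE (negbTE nq) mulr0.
rewrite /mxtrace (@sum_only _ a); last first.
  move=> r nr; rewrite mxE big1 // => s _.
  by rewrite mxE eqxx !val_eqE (negbTE nr) /= mulr0.
rewrite mxE (@sum_only _ b); last first.
  by move=> s ns; rewrite mxE eqxx !val_eqE (negbTE ns) andbF mulr0.
by rewrite mxE eqxx !val_eqE !eqxx mulr1.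
Qed.

Lemma trA_nondeg (I : finType) (d : I -> nat) (W W' : alg d) :
  (forall X, trA (mulA W X) = trA (mulA W' X)) -> forall p, W p = W' p.
Proof.
move=> h p; apply/matrixP => a b.
by rewrite -(trA_unit W a b) -(trA_unit W' a b) h.
Qed.

Lemma psd_c n (c : algC) : 0 < c -> psd (c *: (1%:M : 'M[algC]_n)).
Proof.
move=> hc.
have := @psd_pert n c 0 0 0 hc (lexx _) _ _ _.
rewrite scaler0 add0r; apply.
- by rewrite mul0r ltW.
- by move=> a b; rewrite !mxE rmorph0.
- by rewrite big1 // => a _; rewrite big1 // => b _; rewrite mxE normr0.
Qed.

Theorem lemma3p3
  (I J K L : finType)
  (dAin : I -> nat) (dBout : J -> nat) (dCin : K -> nat) (dDout : L -> nat)
  (hI : (0 < #|I|)%N) (hJ : (0 < #|J|)%N) (hK : (0 < #|K|)%N) (hL : (0 < #|L|)%N)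
  (hdA : forall i, (0 < dAin i)%N) (hdB : forall j, (0 < dBout j)%N)
  (hdC : forall k, (0 < dCin k)%N) (hdD : forall l, (0 < dDout l)%N)
  (S : HomA dAin dBout -> HomA dCin dDout)
  (hS : det_supermap S) :
  exists N : alg dAin -> alg dCin,
    CP N /\ unital N /\
    forall (S_ : HomA dCin dDout -> HomA dAin dBout) (N_ : alg dCin -> alg dAin),
      is_dual S S_ -> is_dual N N_ ->
      forall rho : alg dCin, posA rho -> trA rho = 1 ->
        forall p : J * I,
          S_ (boxt dDout rho) p = boxt dBout (N_ rho) p.
Proof.
pose E := fun x : alg dAin => Emb (dA := dAin) dBout x.
pose N := fun x : alg dAin => PTr (dA := dCin) (dB := dDout) (S (E x)).
have hE : CP E.
  split; first by move=> a x y; rewrite /E Emb_lin.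
  by move=> n X hX; apply: ampl_Emb_pos.
have hP : CP (PTr (dA := dCin) (dB := dDout)).
  split; first by move=> a x y; rewrite PTr_lin.
  by move=> n X hX; apply: ampl_PTr_pos.
exists N; split.
  apply: (CP_comp (f := fun x => S (E x))) => //.
  exact: (CP_comp hE hS.1).
split.
  have hX0 : posA (E (oneA dAin)).
    move=> p; rewrite /E /Emb /scaleA /boxt /oneA tens11.
    by apply: psd_c; apply: cB_gt0.
  have hT : TP (E (oneA dAin)) by apply/TP_PTr => i; rewrite /E PTr_Emb.
  have := hS.2 _ hX0 hT => /TP_PTr hT'.
  by apply: functional_extensionality_dep => k; rewrite /N hT'.
move=> S_ N_ hS_ hN_ rho _ hr p.
apply: trA_nondeg => X.
rewrite hS_ trA_boxt trA_boxt hN_.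
have hg : forall Y, g S rho Y = trA (mulA rho (PTr (S Y))) by [].
rewrite /N -!hg.
have hz : forall i, PTr (dA := dAin) (dB := dBout)
    (addA (scaleA (-1) (E (PTr X))) X) i = 0.
  move=> i; rewrite PTr_lin /E PTr_Emb // /addA /scaleA scaleN1r addNr.
  by [].
have := kill hS hJ hdB hr hz.
rewrite g_lin //.
move/eqP; rewrite mulN1r addrC subr_eq0 => /eqP.
by [].
Qed.
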